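(* There is an absolute constant $d$ such that the following holds. Let $N>0$ and let $A,B\ge 0$ be integers with $A+B=N$. Let $X$ be chosen uniformly at random among all strings in $\{0,1\}^N$ with exactly $A$ ones and $B$ zeros. Then for every $r\ge 1$, $$\Pr_X\left[\,C_{OP}(X)\ \ge\ N-\tfrac{2}{3}\min(A,B)+d\sqrt{rN}\,\right]\ \le\ 2^{-r}\log N .$$
   Context: Logarithms are base $2$. The oblivious-pairing algorithm on input $X=X_0\cdots X_{N-1}\in\{0,1\}^N$ maintains a list $\mathcal S=(S_1,\dots,S_\ell)$ of disjoint subsets of $\{0,\dots,N-1\}$ (''blocks''), each known to be homogeneous (all bits of $X$ indexed by it are equal); $X_{S_j}$ denotes the common value of the bits in $S_j$. Initially $\mathcal S=(\{0\},\{1\},\dots,\{N-1\})$. The operation COMBINE$(\mathcal S,i)$ queries $X_a\oplus X_b$ for some $a\in S_i$, $b\in S_{i+1}$; if the answer is $0$ it replaces $S_i,S_{i+1}$ in the list by the single block $S_i\cup S_{i+1}$ (at that position), and otherwise it removes both $S_i$ and $S_{i+1}$ from the list. The algorithm runs, for $k=1,2,\dots,\lfloor\log N\rfloor$ in turn: while there exists $j$ with $1\le j<\ell$ and $|S_j|=|S_{j+1}|=2^{k-1}$, apply COMBINE$(\mathcal S,j)$ for the smallest such $j$. At the end it outputs ''tie'' if the list is empty and otherwise $X_{S_1}$. $C_{OP}(X)$ denotes the number of XOR queries (COMBINE operations) the oblivious-pairing algorithm makes on input $X$. *)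

(* Defs.v *)
From Stdlib Require Import Reals.
From mathcomp Require Import all_boot.

Set Implicit Arguments.
Unset Strict Implicit.
Unset Printing Implicit Defensive.

(* A string X in {0,1}^N is an N.-tuple bool; X_i = nth false X i
   (true = 1, false = 0). Blocks are lists of indices. *)
Definition bitX (N : nat) (X : N.-tuple bool) (i : nat) : bool := nth false X i.

(* COMBINE on two adjacent blocks: query X_a xor X_b with a in s1, b in s2
   (we take a = head of s1, b = head of s2). *)
Definition combine_pair N (X : N.-tuple bool) (s1 s2 : seq nat) (rest : seq (seq nat))
  : seq (seq nat) :=
  if addb (bitX X (head 0 s1)) (bitX X (head 0 s2)) then rest
  else (s1 ++ s2) :: rest.

Fixpoint op_step N (X : N.-tuple bool) (m : nat) (Sl : seq (seq nat))
  : option (seq (seq nat)) :=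
  match Sl with
  | s1 :: ((s2 :: rest) as t) =>
      if (size s1 == m) && (size s2 == m) then Some (combine_pair X s1 s2 rest)
      else omap (cons s1) (op_step X m t)
  | _ => None
  end.

(* The "while" loop of a phase, returning the new list and the number of
   COMBINE operations made.  Each COMBINE shortens the list, so fuel
   [size Sl] is enough to run the loop to completion. *)
Fixpoint op_phase_fuel N (X : N.-tuple bool) (fuel m : nat) (Sl : seq (seq nat))
  : seq (seq nat) * nat :=
  match fuel with
  | 0 => (Sl, 0)
  | f.+1 =>
      match op_step X m Sl with
      | None => (Sl, 0)
      | Some Sl' => let: (Sl'', c) := op_phase_fuel X f m Sl' in (Sl'', c.+1)
      end
  end.

Definition op_phase N (X : N.-tuple bool) (m : nat) (Sl : seq (seq nat)) :=
  op_phase_fuel X (size Sl) m Sl.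

Definition op_run N (X : N.-tuple bool) : seq (seq nat) * nat :=
  foldl (fun (st : seq (seq nat) * nat) k =>
           let: (Sl, c) := st in
           let: (Sl', c') := op_phase X (2 ^ k.-1) Sl in (Sl', c + c'))
        ([seq [:: i] | i <- iota 0 N], 0)
        (iota 1 (trunc_log 2 N)).

Definition C_OP N (X : N.-tuple bool) : nat := (op_run X).2.

Definition Rleb (x y : R) : bool := if Rle_dec x y then true else false.

Local Open Scope R_scope.

Definition log2 (x : R) : R := ln x / ln 2.

Definition prob_OP (N A B : nat) (d r : R) : R :=
  INR #|[set X : N.-tuple bool |
           (count id X == A) &&
           Rleb (INR N - 2 / 3 * INR (minn A B) + d * sqrt (r * INR N))
                (INR (C_OP X))]|
   / INR 'C(N, A).

(* Main.v *)
Require Import Defs.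
From Stdlib Require Import Reals Lra ZArith Lia.
From mathcomp Require Import all_boot.
From mathcomp Require Import zify.
Set Implicit Arguments.
Unset Strict Implicit.
Unset Printing Implicit Defensive.

Fixpoint redv (v : seq bool) : seq bool :=
  match v with
  | x :: y :: t => if addb x y then redv t else x :: redv t
  | _ => [::]
  end.

Section Alg.
Variables (N : nat) (X : N.-tuple bool).

Definition bval (s : seq nat) := bitX X (head 0 s).

Fixpoint redb (l : seq (seq nat)) : seq (seq nat) * seq (seq nat) :=
  match l with
  | s1 :: s2 :: t => let: (M, L) := redb t in
      if addb (bval s1) (bval s2) then (M, L) else ((s1 ++ s2) :: M, L)
  | _ => ([::], l)
  end.

Lemma op_step_cons m p t : size p != m ->
  op_step X m (p :: t) = omap (cons p) (op_step X m t).
Proof.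
move=> hp; case: t => [|s2 rest] //=.
by rewrite (negbTE hp).
Qed.

Lemma op_step_pre m P l : all (fun s => size s != m) P ->
  op_step X m (P ++ l) = omap (cat P) (op_step X m l).
Proof.
elim: P => [|p P IH]; first by case: (op_step X m l).
rewrite cat_cons => /andP [hp hP]; rewrite op_step_cons // IH //.
by case: (op_step X m l).
Qed.

Lemma op_step_none m l : all (fun s => size s != m) l -> op_step X m l = None.
Proof.
elim: l => [|p l IH] // /andP [hp hl].
by rewrite op_step_cons // IH.
Qed.

Lemma op_step_one m s lo : all (fun s => size s != m) lo ->
  op_step X m (s :: lo) = None.
Proof.
case: lo => [|t rest] // hall.
have /andP [ht hr] := hall.
have e : op_step X m (s :: t :: rest) = omap (cons s) (op_step X m (t::rest)).
  by rewrite /= (negbTE ht) andbF.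
by rewrite e (op_step_none hall).
Qed.

Lemma phase_gen m : 0 < m -> forall n main P lo f,
  size main <= n ->
  all (fun s => size s != m) P -> all (fun s => size s == m) main ->
  all (fun s => size s != m) lo -> (size main)./2 <= f ->
  op_phase_fuel X f m (P ++ main ++ lo) =
    (P ++ (redb main).1 ++ (redb main).2 ++ lo, (size main)./2).
Proof.
move=> m0; elim=> [|n IH] main P lo f.
  case: main => // _ hP _ hlo _; case: f => [|f] //=.
  by rewrite op_step_pre // op_step_none.
case: main => [|s1 [|s2 rest]] hsz hP hmain hlo hf.
- case: f hf => [|f] // _ /=.
  by rewrite op_step_pre // op_step_none.
- case: f hf => [|f] // _ /=.
  by rewrite op_step_pre // op_step_one.
- case: f hf => [|f] hf; first by move: hf; rewrite /=; lia.
  move: hmain => /= /and3P [/eqP h1 /eqP h2 hrest].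
  rewrite /= op_step_pre //.
  have -> : op_step X m [:: s1, s2 & rest ++ lo] = Some (combine_pair X s1 s2 (rest ++ lo)).
    by rewrite /= h1 h2 eqxx.
  rewrite /= /combine_pair -/(bval s1) -/(bval s2).
  have hsr : size rest <= n by move: hsz => /=; lia.
  have hfr : (size rest)./2 <= f by move: hf => /=; lia.
  case: (redb rest) (IH rest) => M L IH'.
  case: ifP => hb.
  - by rewrite (IH' P lo f).
  - have -> : P ++ (s1 ++ s2) :: rest ++ lo = (rcons P (s1 ++ s2)) ++ rest ++ lo
      by rewrite -cats1 -catA.
    rewrite (IH' _ lo f) //; first by rewrite -cats1 -catA.
    rewrite all_rcons hP size_cat h1 h2 andbT; apply/eqP; lia.
Qed.

Lemma redb_props m : 0 < m -> forall n main, size main <= n ->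
  all (fun s => size s == m) main ->
  [/\ map bval (redb main).1 = redv (map bval main),
      all (fun s => size s == m.*2) (redb main).1 &
      all (fun s => size s == m) (redb main).2].
Proof.
move=> m0; elim=> [|n IH] main.
  by case: main.
case: main => [|s1 [|s2 rest]] //= hsz =>/=.
case/and3P=> /eqP h1 /eqP h2 hr.
have hsr : size rest <= n by lia.
have [IH1 IH2 IH3] := IH rest hsr hr.
case: (redb rest) IH1 IH2 IH3 => M L /= IH1 IH2 IH3.
rewrite -/(bval s1) -/(bval s2).
case: ifP => hb /=; first by split.
split=> //.
- rewrite IH1; congr (_ :: _); rewrite /bval.
  by case: (s1) h1 => [|x s1'] //= h1; lia.
- by rewrite IH2 size_cat h1 h2 -addnn eqxx.
Qed.

Definition Inv k (main lo : seq (seq nat)) :=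
  all (fun s => size s == 2 ^ k) main && all (fun s => size s < 2 ^ k) lo.

Lemma phase_ok k main lo : Inv k main lo ->
  op_phase X (2 ^ k) (main ++ lo) =
    ((redb main).1 ++ ((redb main).2 ++ lo), (size main)./2) /\
  Inv k.+1 (redb main).1 ((redb main).2 ++ lo) /\
  map bval (redb main).1 = redv (map bval main).
Proof.
case/andP=> hm hlo.
have m0 : 0 < 2 ^ k by rewrite expn_gt0.
have [e1 e2 e3] := redb_props m0 (leqnn (size main)) hm.
have hlo' : all (fun s => size s != 2 ^ k) lo.
  by apply: sub_all hlo => s hs; rewrite neq_ltn hs.
split; [|split=> //].
- rewrite /op_phase -(cat0s (main ++ lo)) (phase_gen m0 (leqnn (size main))) //.
  by rewrite /= size_cat; lia.
- rewrite /Inv all_cat; apply/and3P; split.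
  + by apply: sub_all e2 => s; rewrite expnS mul2n.
  + apply: sub_all e3 => s /eqP ->; rewrite expnS; lia.
  + apply: sub_all hlo => s hs; rewrite expnS; lia.
Qed.

Definition stepf (st : seq (seq nat) * nat) k :=
  let: (Sl, c) := st in
  let: (Sl', c') := op_phase X (2 ^ k.-1) Sl in (Sl', c + c').

Lemma run_gen j : forall k main lo c, Inv k main lo ->
  (foldl stepf (main ++ lo, c) (iota k.+1 j)).2 =
    c + \sum_(i < j) (size (iter i redv (map bval main)))./2.
Proof.
elim: j => [|j IH] k main lo c hinv; first by rewrite big_ord0 addn0.
rewrite /= {1}/stepf /=.
have [e1 [e2 e3]] := phase_ok hinv.
rewrite e1 IH // big_ord_recl /= -addnA; congr (_ + (_ + _)).
  by rewrite size_map.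
by apply: eq_bigr => i _; rewrite add0n -iterS iterSr e3.
Qed.

Lemma C_OP_eq : C_OP X = \sum_(i < trunc_log 2 N) (size (iter i redv X))./2.
Proof.
rewrite /C_OP /op_run.
have -> : [seq [:: i] | i <- iota 0 N] = [seq [:: i] | i <- iota 0 N] ++ [::] by rewrite cats0.
have hinv : Inv 0 [seq [:: i] | i <- iota 0 N] [::].
  by rewrite /Inv andbT; apply/allP => s /mapP [i _ ->].
rewrite (run_gen _ _ hinv) add0n.
have -> : map bval [seq [:: i] | i <- iota 0 N] = X.
  rewrite -map_comp /bval /bitX /=.
  rewrite -{2}(mkseq_nth false X) /mkseq size_tuple.
  by apply: eq_map => i.
done.
Qed.
End Alg.

Fixpoint allseq n : seq (seq bool) :=
  if n is n'.+1 then [seq true :: s | s <- allseq n'] ++ [seq false :: s | s <- allseq n']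
  else [:: [::]].

Lemma mem_allseq n s : (s \in allseq n) = (size s == n).
Proof.
elim: n s => [|n IH] [|x s] //=.
- by rewrite mem_cat; apply/negbTE; rewrite negb_or; apply/andP; split;
     apply/mapP => [[t _]].
- rewrite mem_cat eqSS -IH; case: x.
  + rewrite mem_map; last by move=> ? ? [].
    by case: (s \in allseq n) => //=; apply/negbTE/mapP => [[t _]].
  + rewrite (mem_map (f := cons false)); last by move=> ? ? [].
    by rewrite orbC; case: (s \in allseq n) => //=; apply/negbTE/mapP => [[t _]].
Qed.

Lemma uniq_allseq n : uniq (allseq n).
Proof.
elim: n => [|n IH] //=.
rewrite cat_uniq !map_inj_uniq ?IH //; try by move=> ? ? [].
rewrite andbT; apply/hasPn => s /mapP [t _ ->]; apply/mapP => [[t' _]] //.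
Qed.

Definition cnt n a (Q : pred (seq bool)) :=
  count (fun u => (count id u == a) && Q u) (allseq n).

Lemma cntS n a Q : cnt n.+1 a Q =
  (0 < a) * cnt n a.-1 (fun u => Q (true :: u)) + cnt n a (fun u => Q (false :: u)).
Proof.
rewrite /cnt /= count_cat !count_map; congr (_ + _).
case: a => [|a] /=.
  by rewrite mul0n; apply/eqP; rewrite -leqn0 leqNgt -has_count; apply/hasPn => u _ /=.
by rewrite mul1n; apply: eq_count => u /=; rewrite add1n eqSS.
Qed.

Lemma cnt_ext n a (Q1 Q2 : pred (seq bool)) :
  (forall u, size u = n -> count id u = a -> Q1 u = Q2 u) -> cnt n a Q1 = cnt n a Q2.
Proof.
move=> h; apply: eq_in_count => u; rewrite mem_allseq => /eqP hs.
by case: eqP => //= ha; rewrite h.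
Qed.

Lemma cnt_le n a (Q1 Q2 : pred (seq bool)) :
  (forall u, size u = n -> count id u = a -> Q1 u -> Q2 u) -> cnt n a Q1 <= cnt n a Q2.
Proof.
move=> h; rewrite (@cnt_ext n a Q1 (fun u => (size u == n) && Q1 u)).
  rewrite /cnt; apply: sub_count => u /andP [/eqP ha /andP [/eqP hs hq]].
  by rewrite ha eqxx (h u hs ha hq).
by move=> u -> _; rewrite eqxx.
Qed.

Lemma cnt_true n a : cnt n a predT = 'C(n, a).
Proof.
elim: n a => [|n IH] a.
  by case: a.
rewrite cntS !IH; case: a => [|a]; first by rewrite bin0 mul0n.
by rewrite binS ltn0Sn mul1n addnC.
Qed.

Lemma cnt0 n a : cnt n a pred0 = 0.
Proof. by rewrite /cnt; apply/eqP; rewrite -leqn0 leqNgt -has_count; apply/hasPn => u _ /=; rewrite andbF. Qed.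

Definition g n a l k := 'C(n./2, l) * 2 ^ (n./2 - l) *
  ((2 * k + (n./2 - l) <= a) && (a <= 2 * k + (n./2 - l) + odd n)).

Lemma cntSS n a Q : cnt n.+2 a Q =
  (0 < a) * ((0 < a.-1) * cnt n a.-2 (fun u => Q [:: true, true & u])
             + cnt n a.-1 (fun u => Q [:: true, false & u]))
  + ((0 < a) * cnt n a.-1 (fun u => Q [:: false, true & u])
     + cnt n a (fun u => Q [:: false, false & u])).
Proof. by rewrite cntS !cntS. Qed.

Lemma pre_cnt_aux n : (forall a w, cnt n a (fun u => redv u == w) = g n a (size w) (count id w))
  /\ (forall a w, cnt n.+1 a (fun u => redv u == w) = g n.+1 a (size w) (count id w)).
Proof.
elim: n => [|n [IH0 IH1]].
  split=> a w.
  - rewrite /cnt /g /=; case: w => [|x w] /=.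
      by case: a.
    by rewrite bin0n !mul0n andbF.
  - rewrite cntS /cnt /g /=; case: w => [|x w] /=.
      by case: a => [|[|a]].
    by rewrite bin0n !mul0n; case: a => [|a] /=; rewrite ?andbF.
split; first exact: IH1.
move=> a w; rewrite cntSS.
set h := n./2.
have hh : n.+2./2 = h.+1 by [].
case: w => [|x w].
- rewrite (@cnt_ext _ _ (fun u => [:: true, true & u] \in [::]) pred0) //.
  rewrite (@cnt_ext _ _ (fun u => redv [:: false, false & u] == [::]) pred0) //.
  rewrite !cnt0 /=.
  rewrite (@cnt_ext _ _ (fun u => redv u == [::]) (fun u => redv u == [::])) //.
  rewrite !IH0 /g /= -/h.
  rewrite !subn0 !muln0 !add0n !bin0 /= negbK.
  case: a => [|a] /=.
    by rewrite !mul0n !muln0.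
  have -> : (h.+1 <= a.+1 <= h.+1 + odd n) = (h <= a <= h + odd n) by lia.
  rewrite expnS; move: (2 ^ h) (h <= a <= h + odd n : nat) => x y; nia.
have eqc : forall (y : bool) u w', (y :: u == y :: w') = (u == w') by move=> *; rewrite eqseq_cons eqxx.
case: x.
- rewrite (@cnt_ext n _ (fun u => redv [:: true, true & u] == true :: w) (fun u => redv u == w)); last by move=> u _ _ /=; rewrite eqc.
  rewrite (@cnt_ext n _ (fun u => redv [:: true, false & u] == true :: w) (fun u => redv u == true :: w)) //.
  rewrite (@cnt_ext n _ (fun u => redv [:: false, false & u] == true :: w) pred0) //.
  rewrite cnt0 !IH0 /g /= -/h negbK.
  set l := size w; set k := count id w.
  case: (ltngtP l h) => hl.
  + have e1 : h - l = (h - l.+1).+1 by lia.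
    rewrite subSS e1 binS expnS.
    set t := h - l.+1.
    have -> : (2 * k.+1 + t.+1 <= a <= 2 * k.+1 + t.+1 + odd n) = (2 * k + t.+1 <= a.-2 <= 2 * k + t.+1 + odd n) && (1 < a) by lia.
    have -> : (2 * k.+1 + t <= a.-1 <= 2 * k.+1 + t + odd n) = (2 * k + t.+1 <= a.-2 <= 2 * k + t.+1 + odd n) && (1 < a) by lia.
    move: (2 * k + t.+1 <= a.-2 <= 2 * k + t.+1 + odd n) => I.
    case: a => [|[|a]] /=; rewrite ?andbF ?andbT //=; nia.
  + by rewrite !bin_small //; lia.
  + rewrite hl subnn subSS subnn (bin_small (ltnSn h)) binn !muln0 !mul0n !addn0 !expn0 !mul1n ?addn0.
    by case: a => [|[|a]] //=; rewrite binn; lia.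
- rewrite (@cnt_ext n _ (fun u => redv [:: true, true & u] == false :: w) pred0) //.
  rewrite (@cnt_ext n _ (fun u => redv [:: true, false & u] == false :: w) (fun u => redv u == false :: w)) //.
  rewrite (@cnt_ext n _ (fun u => redv [:: false, false & u] == false :: w) (fun u => redv u == w)); last by move=> u _ _ /=; rewrite eqc.
  rewrite cnt0 !IH0 /g /= -/h negbK.
  set l := size w; set k := count id w.
  case: (ltngtP l h) => hl.
  + have e1 : h - l = (h - l.+1).+1 by lia.
    rewrite subSS e1 binS expnS.
    set t := h - l.+1.
    case: a => [|a] /=; rewrite ?add0n.
      have -> : (2 * k + t.+1 <= 0) = false by lia.
      by rewrite !muln0 ?mul0n.
    have -> : (2 * k + t <= a <= 2 * k + t + odd n) = (2 * k + t.+1 <= a.+1 <= 2 * k + t.+1 + odd n) by lia.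
    move: (2 * k + t.+1 <= a.+1 <= 2 * k + t.+1 + odd n) => I.
    nia.
  + by rewrite !bin_small //; lia.
  + rewrite hl subnn subSS subnn (bin_small (ltnSn h)) !binn ?add0n.
    by rewrite !mul0n !muln0 !add0n.
Qed.

Lemma pre_cnt n a w : cnt n a (fun u => redv u == w) = g n a (size w) (count id w).
Proof. by case: (pre_cnt_aux n) => h _; apply: h. Qed.

Lemma count_sum (T : Type) (p : pred T) s : count p s = \sum_(x <- s) p x.
Proof. by elim: s => [|x s IH]; rewrite ?big_nil ?big_cons //= IH. Qed.

Lemma sum_uniq_eq (T : eqType) (s : seq T) v (F : T -> nat) : uniq s ->
  \sum_(x <- s) (v == x) * F x = (v \in s) * F v.
Proof.
elim: s => [|x s IH]; first by rewrite big_nil.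
rewrite big_cons /= => /andP [hx hs]; rewrite IH // in_cons.
case: (eqVneq v x) => [->|hne] /=.
  by rewrite (negbTE hx) mul0n addn0 mul1n.
by rewrite mul0n.
Qed.

Lemma sum_ord_eq (m n : nat) (c : nat -> nat) :
  \sum_(l < n) (m == nat_of_ord l) * c l = (m < n) * c m.
Proof.
elim: n => [|n IH]; first by rewrite big_ord0 ltn0.
rewrite big_ord_recr /= IH.
case: (ltngtP m n) => h; try lia.
by rewrite h ltnSn mul1n.
Qed.

Lemma redv_size u : size (redv u) <= (size u)./2.
Proof.
have: size u <= size u by [].
move: {2}(size u) => n; elim: n u => [|n IH] [|x [|y u]] //= hs.
have := IH u; case: (x (+) y) => /=; lia.
Qed.

Lemma decomp n a (Q : pred (seq bool)) : cnt n a (fun u => Q (redv u)) =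
  \sum_(l < n.+1) \sum_(k < n.+1) g n a l k * cnt l k Q.
Proof.
have sz : forall u, size (redv u) <= size u.
  by move=> u; apply: leq_trans (redv_size u) _; rewrite -{2}(odd_double_half (size u)); lia.
rewrite /cnt count_sum.
transitivity (\sum_(u <- allseq n) \sum_(l < n.+1) \sum_(w <- allseq l)
   ((count id u == a) && (redv u == w)) * Q w).
  rewrite big_seq_cond [RHS]big_seq_cond; apply: eq_bigr => u /andP [hu _].
  rewrite mem_allseq in hu.
  transitivity (\sum_(l < n.+1) (size (redv u) == l) * ((count id u == a) * Q (redv u))).
    rewrite (sum_ord_eq _ _ (fun _ => (count id u == a) * Q (redv u))) (_ : size (redv u) < n.+1) ?mul1n; last by rewrite ltnS -(eqP hu) sz.
    by case: (count id u == a); case: (Q (redv u)).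
  apply: eq_bigr => l _.
  transitivity (\sum_(w <- allseq l) (redv u == w) * ((count id u == a) * Q w)).
    by rewrite sum_uniq_eq ?uniq_allseq // mem_allseq.
  by apply: eq_bigr => w _; case: (count id u == a); case: (redv u == w); case: (Q w).
rewrite exchange_big /=; apply: eq_bigr => l _.
rewrite exchange_big /=.
transitivity (\sum_(w <- allseq l) Q w * g n a l (count id w)).
  apply: eq_big_seq => w; rewrite mem_allseq => /eqP hw.
  rewrite -hw -pre_cnt /cnt count_sum big_distrr /=.
  by apply: eq_bigr => u _; case: (Q w); case: (count id u == a); case: (redv u == w).
transitivity (\sum_(w <- allseq l) \sum_(k < n.+1) (count id w == k) * (Q w * g n a l k)).
  apply: eq_big_seq => w; rewrite mem_allseq => /eqP hw.
  rewrite (sum_ord_eq _ _ (fun k => Q w * g n a l k)) (_ : count id w < n.+1) ?mul1n //.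
  by rewrite ltnS (leq_trans (count_size _ _)) // hw -ltnS.
rewrite exchange_big /=; apply: eq_bigr => k _.
rewrite count_sum big_distrr /=.
by apply: eq_bigr => w _; case: (Q w); case: (count id w == k) => /=; rewrite ?mul0n ?muln0 ?mul1n ?muln1 // mulnC.
Qed.

Definition T n a l k := g n a l k * 'C(l, k).
Definition M n a l := \sum_(k < n.+1) T n a l k.

Lemma M_total n a : \sum_(l < n.+1) M n a l = 'C(n, a).
Proof.
rewrite -cnt_true.
have -> : cnt n a predT = cnt n a (fun u => predT (redv u)) by [].
rewrite decomp; apply: eq_bigr => l _; apply: eq_bigr => k _.
by rewrite cnt_true.
Qed.

Lemma cnt_size n a (B : nat -> bool) :
  cnt n a (fun u => B (size (redv u))) = \sum_(l < n.+1) B l * M n a l.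
Proof.
rewrite (decomp n a (fun v => B (size v))); apply: eq_bigr => l _.
rewrite /M big_distrr; apply: eq_bigr => k _ /=.
have -> : cnt l k (fun v => B (size v)) = B l * 'C(l, k).
  rewrite (@cnt_ext l k _ (fun _ => B l)); last by move=> u -> _.
  case: (B l); first by rewrite -cnt_true mul1n.
  by rewrite mul0n -(cnt0 l k).
by rewrite /T; case: (B l); rewrite ?mul1n ?mul0n ?muln0.
Qed.

Lemma M_big n a l : n./2 < l -> M n a l = 0.
Proof.
move=> hl; rewrite /M big1 // => k _.
by rewrite /T /g bin_small.
Qed.

Lemma T_step n a l0 k : l0.+2 <= n./2 ->
  T n a l0 k * ((n./2 - l0.+2).+1 * (n./2 - l0.+2).+2)
  = 4 * k.+1 * (l0.+1 - k) * T n a l0.+2 k.+1.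
Proof.
move=> hl; rewrite /T /g.
set h := n./2; set y := h - l0.+2.
have e1 : h - l0 = y.+2 by rewrite /y; lia.
rewrite e1.
have -> : (2 * k.+1 + y <= a <= 2 * k.+1 + y + odd n) =
          (2 * k + y.+2 <= a <= 2 * k + y.+2 + odd n) by lia.
move: (2 * k + y.+2 <= a <= 2 * k + y.+2 + odd n : nat) => I.
have A : 'C(h, l0.+2) * (l0.+1 * l0.+2) = 'C(h, l0) * (y.+2 * y.+1).
  have a1 := mul_bin_left h l0.+1.
  have a2 := mul_bin_left h l0.
  have e2 : h - l0.+1 = y.+1 by rewrite /y; lia.
  rewrite e2 in a1; rewrite e1 in a2.
  rewrite mulnA (mulnC _ l0.+1) -mulnA (mulnC _ l0.+2) a1 mulnCA a2; nia.
have B : 'C(l0.+2, k.+1) * (k.+1 * (l0.+1 - k)) = 'C(l0, k) * (l0.+1 * l0.+2).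
  have b1 := mul_bin_diag l0.+2 k.
  have b2 := mul_bin_down l0.+1 k.
  simpl in b1, b2.
  move: b1 b2; set C1 := 'C(l0.+1, k); set C2 := 'C(l0.+2, k.+1); set C0 := 'C(l0, k); set q := l0.+1 - k.
  move=> b1 b2.
  have : C2 * (k.+1 * q) = (l0.+2 * C1) * q by rewrite b1; nia.
  move=> ->.
  by rewrite -mulnA (mulnC C1 q) -b2; nia.
apply/eqP; rewrite -(@eqn_pmul2r (l0.+1 * l0.+2)) //; apply/eqP.
rewrite expnS expnS.
have -> : 4 * k.+1 * (l0.+1 - k) * ('C(h, l0.+2) * 2 ^ y * I * 'C(l0.+2, k.+1)) * (l0.+1 * l0.+2)
  = (4 * 2 ^ y * I) * ('C(h, l0.+2) * (l0.+1 * l0.+2)) * ('C(l0.+2, k.+1) * (k.+1 * (l0.+1 - k))).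
  set q := l0.+1 - k; nia.
rewrite A B; nia.
Qed.

Lemma T_ind n a l k : 0 < T n a l k ->
  (2 * k + (n./2 - l) <= a <= 2 * k + (n./2 - l) + odd n).
Proof.
rewrite /T /g; case: (2 * k + (n./2 - l) <= a <= 2 * k + (n./2 - l) + odd n) => //.
by rewrite muln0 mul0n.
Qed.

Lemma T_pair n a l0 k : l0.+2 <= n./2 -> 0 < T n a l0.+2 k.+1 ->
  (a - (n./2 - l0.+2).+1) * (n - a - (n./2 - l0.+2).+1) <= 4 * k.+1 * (l0.+1 - k).
Proof.
move=> hl /T_ind hi.
have hn := odd_double_half n.
set h := n./2 in hl hi hn *; set y := h - l0.+2 in hi *.
rewrite -mulnA -(mulnA 2 2) (mulnCA 2 k.+1) mulnA.
apply: leq_mul; rewrite /y; lia.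
Qed.

Lemma T0 n a l : l <= n./2 -> (n./2 - l).+2 <= a -> T n a l 0 = 0.
Proof.
move=> hl ha; rewrite /T /g.
have -> : (2 * 0 + (n./2 - l) <= a <= 2 * 0 + (n./2 - l) + odd n) = false by lia.
by rewrite muln0 mul0n.
Qed.

Local Open Scope R_scope.

Lemma INR_muln m n : INR (m * n)%nat = INR m * INR n.
Proof. by rewrite -mult_INR multE. Qed.
Lemma INR_addn m n : INR (m + n)%nat = INR m + INR n.
Proof. by rewrite -plus_INR plusE. Qed.

Lemma sum_le_R (I : Type) (s : seq I) (f h : I -> nat) (c1 c2 : R) :
  (forall i, c1 * INR (f i) <= c2 * INR (h i)) ->
  c1 * INR (\sum_(i <- s) f i) <= c2 * INR (\sum_(i <- s) h i).
Proof.
move=> H; elim: s => [|x s IH]; first by rewrite !big_nil /=; lra.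
rewrite !big_cons !plus_INR; have := H x; lra.
Qed.

Lemma M_step n a l0 (rho : R) : (l0.+2 <= n./2)%nat ->
  ((n./2 - l0.+2).+2 <= a)%nat -> 0 <= rho ->
  rho * INR ((n./2 - l0.+2).+1 * (n./2 - l0.+2).+2)%nat <=
    INR ((a - (n./2 - l0.+2).+1) * (n - a - (n./2 - l0.+2).+1))%nat ->
  rho * INR (M n a l0.+2) <= INR (M n a l0).
Proof.
move=> hl ha hr hrho.
have e2 : M n a l0.+2 = \sum_(k < n) T n a l0.+2 k.+1.
  rewrite /M big_ord_recl T0 //.
have e0 : (\sum_(k < n) T n a l0 k <= M n a l0)%nat.
  rewrite /M big_ord_recr /=; exact: leq_addr.
apply: Rle_trans (_ : 1 * INR (\sum_(k < n) T n a l0 k) <= _); last first.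
  by rewrite Rmult_1_l; apply: le_INR; apply/leP.
rewrite e2; apply: sum_le_R => k.
case: (posnP (T n a l0.+2 k.+1)) => ht.
  by rewrite ht /=; have := pos_INR (T n a l0 k); lra.
have hp := T_pair hl ht.
have hs := T_step a k hl.
set Y := ((n./2 - l0.+2).+1 * (n./2 - l0.+2).+2)%nat in hs hrho.
set t0 := T n a l0 k in hs *; set t2 := T n a l0.+2 k.+1 in hs hp *.
have hY : 0 < INR Y by apply: lt_0_INR; apply/ltP; rewrite /Y muln_gt0.
have h1 : INR t0 * INR Y = INR (4 * k.+1 * (l0.+1 - k))%nat * INR t2 by rewrite -!INR_muln hs.
have h2 : INR ((a - (n./2 - l0.+2).+1) * (n - a - (n./2 - l0.+2).+1))%nat <= INR (4 * k.+1 * (l0.+1 - k))%nat.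
  by apply: le_INR; apply/leP.
have h3 := pos_INR t2.
have h4 : rho * INR Y * INR t2 <= INR t0 * INR Y by nra.
rewrite Rmult_1_l; nra.
Qed.

Lemma floor_nat x : 0 <= x -> exists k : nat, INR k <= x < INR k + 1.
Proof.
move=> hx; case: (archimed x) => h1 h2.
have hz : (0 < up x)%Z by apply: lt_IZR; rewrite /=; lra.
exists (Z.to_nat (up x - 1)).
rewrite INR_IZR_INZ Z2Nat.id; last by lia.
rewrite minus_IZR /=; lra.
Qed.

Lemma core_ineq (m a b E Y : R) : 0 < E -> E < m -> m <= a -> m <= b -> 1 <= Y ->
  Y < m / 2 - E / 3 -> (1 + E / m) ^ 2 * ((Y - 1) * Y) <= (a - Y + 1) * (b - Y + 1).
Proof.
move=> hE hEm hma hmb hY hYm.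
set eta := E / m.
have hm : 0 < m by lra.
have he : eta * m = E by rewrite /eta; field; lra.
have he0 : 0 < eta by rewrite /eta; apply: Rdiv_lt_0_compat.
have h1 : eta * Y <= E / 2 by nra.
have h2 : (1 + eta) * Y <= a - Y + 1 by lra.
have h3 : (1 + eta) * Y <= b - Y + 1 by lra.
have h4 : 0 <= (1 + eta) * Y by nra.
have h5 : ((1 + eta) * Y) ^ 2 <= (a - Y + 1) * (b - Y + 1).
  rewrite /= Rmult_1_r; apply: Rmult_le_compat => //.
have h6 : (1 + eta) ^ 2 * ((Y - 1) * Y) <= ((1 + eta) * Y) ^ 2.
  rewrite Rpow_mult_distr; apply: Rmult_le_compat_l; first by apply: pow2_ge_0.
  rewrite /= Rmult_1_r; nra.
lra.
Qed.

Definition stepok n a l0 (rho : R) :=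
  (l0.+2 <= n./2)%nat /\ ((n./2 - l0.+2).+2 <= a)%nat /\
  rho * INR ((n./2 - l0.+2).+1 * (n./2 - l0.+2).+2)%nat <=
    INR ((a - (n./2 - l0.+2).+1) * (n - a - (n./2 - l0.+2).+1))%nat.

Lemma M_chain n a l (rho : R) s : 0 <= rho -> (2 * s <= l)%nat ->
  (forall i, (i < s)%nat -> stepok n a (l - 2 * i - 2) rho) ->
  rho ^ s * INR (M n a l) <= INR (M n a (l - 2 * s)).
Proof.
move=> hr; elim: s => [|s IH] hs hok.
  by rewrite /= Rmult_1_l muln0 subn0; lra.
have hs' : (2 * s <= l)%nat by lia.
have IH' := IH hs' (fun i hi => hok i (ltnW hi)).
have [h1 [h2 h3]] := hok s (ltnSn s).
have e1 : (l - 2 * s = (l - 2 * s - 2).+2)%nat by lia.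
have e2 : (l - 2 * s.+1 = l - 2 * s - 2)%nat by lia.
rewrite e1 in IH'; rewrite e2.
apply: Rle_trans (M_step h1 h2 hr h3).
rewrite /= Rmult_assoc; apply: Rmult_le_compat_l => //.
Qed.

Lemma sum_shift (F : nat -> nat) t N :
  \sum_(l < N + t) (t <= l) * F (l - t) = \sum_(l < N) F l.
Proof.
elim: N => [|N IH].
  by rewrite big_ord0 add0n big1 // => l _; rewrite leqNgt ltn_ord.
rewrite addSn !big_ord_recr /= IH.
by rewrite leq_addl mul1n addnK.
Qed.

Lemma sum_widen (F : nat -> nat) N t : (\sum_(l < N) F l <= \sum_(l < N + t) F l)%nat.
Proof.
elim: t => [|t IH]; first by rewrite addn0.
by rewrite addnS big_ord_recr /=; apply: leq_trans IH (leq_addr _ _).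
Qed.

Definition Rltb (x y : R) : bool := if Rlt_dec x y then true else false.

Definition Bad (E : R) (w : seq bool) : bool :=
  Rltb (2 * INR ((size w)./2 - size (redv w))%nat + E)
       (INR (minn (count id w) (size w - count id w))).

Lemma pow_ge_2 (eta : R) q : 0 <= eta -> 1 <= INR q * eta -> 2 <= (1 + eta) ^ q.
Proof.
move=> h1 h2; case: (Rle_lt_or_eq_dec 0 eta h1) => [hp|he].
  have := poly q eta hp; lra.
by rewrite -he Rmult_0_r in h2; lra.
Qed.

Lemma tail n a (E r : R) : 1 <= r -> 0 <= E -> 1000 * r * INR n <= E * E ->
  INR (cnt n a (Bad E)) <= Rpower 2 (- r) * INR 'C(n, a).
Proof.
move=> hr hE hEn.
have hRp : 0 < Rpower 2 (- r) by rewrite /Rpower; apply: exp_pos.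
case: (leqP a n) => han; last first.
  have : (cnt n a (Bad E) <= cnt n a predT)%nat by apply: cnt_le.
  rewrite cnt_true bin_small // leqn0 => /eqP ->; rewrite /= Rmult_0_r; lra.
set h := n./2; set m := minn a (n - a).
set B := fun l => Rltb (2 * INR (h - l)%nat + E) (INR m).
have e1 : cnt n a (Bad E) = cnt n a (fun u => B (size (redv u))).
  by apply: cnt_ext => u hu hc; rewrite /Bad /B hu hc.
rewrite e1 cnt_size -M_total.
have hC0 : forall x, 0 <= Rpower 2 (- r) * INR x.
  by move=> x; apply: Rmult_le_pos; [lra|apply: pos_INR].
case: (Rlt_dec E (INR m)) => hEm; last first.
  rewrite big1 //= => l _.
  rewrite /B /Rltb; case: Rlt_dec => //= hh.
  have := pos_INR (h - l); lra.
have hmh : (m <= h)%nat.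
  have : (m + m <= n)%nat by rewrite /m; lia.
  have hh := odd_double_half n; rewrite -addnn in hh.
  move=> hmm; rewrite /h; lia.
have hma : (m <= a)%nat by rewrite /m; lia.
have hmb : (m <= n - a)%nat by rewrite /m; lia.
have hmn : INR m <= INR n by apply: le_INR; apply/leP; lia.
have hE31 : 31 < E.
  have hn1 : 1 <= INR n.
    case: (posnP n) => hn0; last by apply: (le_INR 1); apply/leP.
    have : m = 0%nat by rewrite /m hn0 sub0n minn0.
    move=> hm0; rewrite hm0 /= in hEm; lra.
  nra.
have hm0 : 0 < INR m by lra.
have [s [hs1 hs2]] := floor_nat (ltac:(lra) : 0 <= E / 12).
have [q0 [hq1 hq2]] : exists k : nat, INR k <= INR m / E < INR k + 1.
  by apply: floor_nat; apply: Rlt_le; apply: Rdiv_lt_0_compat; lra.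
have [J0 [hJ1 hJ2]] := floor_nat (ltac:(lra) : 0 <= r).
set eta := E / INR m.
have heta : 0 <= eta by rewrite /eta; apply: Rlt_le; apply: Rdiv_lt_0_compat; lra.
set rho := (1 + eta) ^ 2.
have hrho0 : 0 <= rho by apply: pow2_ge_0.
have K1 : Rpower 2 r <= rho ^ s.
  have hqJ : (q0.+1 * J0.+1 <= 2 * s)%nat.
    apply/leP; apply: INR_le.
    rewrite INR_muln INR_muln !S_INR /=.
    have h1 : (INR m + E) * (r + 1) <= E * E / 6 - 2 * E.
      have : (INR m + E) * (r + 1) <= 4 * r * INR n by nra.
      nra.
    have h2 : (INR q0 + 1) * (INR J0 + 1) <= (INR m / E + 1) * (r + 1).
      apply: Rmult_le_compat; try lra; have := pos_INR q0; have := pos_INR J0; lra.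
    have h3 : (INR m / E + 1) * (r + 1) * E = (INR m + E) * (r + 1) by field; lra.
    have h4 : (INR m / E + 1) * (r + 1) <= E / 6 - 2.
      apply: (Rmult_le_reg_r E); first lra.
      rewrite h3; have -> : (E / 6 - 2) * E = E * E / 6 - 2 * E by field.
      exact: h1.
    lra.
  have hq : 2 <= (1 + eta) ^ q0.+1.
    apply: pow_ge_2 => //.
    have : INR m / E * eta = 1 by rewrite /eta; field; lra.
    rewrite S_INR; nra.
  apply: Rle_trans (_ : Rpower 2 (INR J0.+1) <= _).
    apply: Rle_Rpower; first lra.
    by rewrite S_INR; lra.
  rewrite Rpower_pow; last lra.
  rewrite /rho -pow_mult.
  apply: Rle_trans (_ : (1 + eta) ^ (q0.+1 * J0.+1) <= _); last first.
    by apply: Rle_pow; [lra | apply/leP].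
  rewrite pow_mult; apply: pow_incr; lra.
have hB2s : forall l, B l -> (2 * s < l)%nat.
  move=> l; rewrite /B /Rltb; case: Rlt_dec => //= hh _.
  apply/ltP; apply: INR_lt; rewrite INR_muln /=.
  case: (leqP l h) => hlh.
    rewrite minus_INR in hh; last by apply/leP.
    have : INR m <= INR h by apply: le_INR; apply/leP.
    lra.
  have : INR h < INR l by apply: lt_INR; apply/ltP.
  have : INR m <= INR h by apply: le_INR; apply/leP.
  lra.
have K2 : forall l : 'I_n.+1, rho ^ s * INR (B l * M n a l)%nat <=
                             1 * INR (B l * M n a (l - 2 * s))%nat.
  move=> l; case hB: (B l); last by rewrite !mul0n /=; lra.
  rewrite !mul1n Rmult_1_l.
  case: (leqP l h) => hlh; last first.
    rewrite M_big // /= Rmult_0_r; apply: pos_INR.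
  have h2s := hB2s _ hB.
  have hc : 2 * INR (h - l)%nat + E < INR m.
    by move: hB; rewrite /B /Rltb; case: Rlt_dec.
  rewrite minus_INR in hc; last by apply/leP.
  apply: M_chain => //; first lia.
  move=> i hi.
  have hy : (n./2 - (l - 2 * i - 2).+2 = h - l + 2 * i)%nat by rewrite -/h; lia.
  rewrite /stepok hy -/h.
  have hiR : INR i.+1 <= INR s by apply: le_INR; apply/leP.
  rewrite S_INR in hiR.
  have hYm : INR (h - l + 2 * i)%nat + 2 < INR m / 2 - E / 3.
    rewrite INR_addn INR_muln minus_INR /=; last by apply/leP.
    lra.
  have hYa : ((h - l + 2 * i).+2 <= a)%nat.
    apply/leP; apply: INR_le; rewrite !S_INR.
    have : INR m <= INR a by apply: le_INR; apply/leP.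
    have := pos_INR m; lra.
  have hYb : ((h - l + 2 * i).+2 <= n - a)%nat.
    apply/leP; apply: INR_le; rewrite !S_INR.
    have : INR m <= INR (n - a) by apply: le_INR; apply/leP.
    have := pos_INR m; lra.
  split; first by lia.
  split => //.
  set y := (h - l + 2 * i)%nat in hYm hYa hYb *.
  have hb : INR m <= INR (n - a) by apply: le_INR; apply/leP.
  have ha : INR m <= INR a by apply: le_INR; apply/leP.
  have hc0 := @core_ineq (INR m) (INR a) (INR (n - a)) E (INR y + 2) ltac:(lra) hEm ha hb
    ltac:(have := pos_INR y; lra) hYm.
  have f1 : INR (a - y.+1)%nat = INR a - (INR y + 2) + 1.
    by rewrite minus_INR ?S_INR; [ring | apply/leP; lia].
  have f2 : INR (n - a - y.+1)%nat = INR (n - a) - (INR y + 2) + 1.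
    by rewrite minus_INR ?S_INR; [ring | apply/leP; lia].
  have f3 : INR (y.+1 * y.+2)%nat = (INR y + 2 - 1) * (INR y + 2).
    by rewrite INR_muln !S_INR; ring.
  rewrite f3 INR_muln f1 f2; exact: hc0.
have K3 : rho ^ s * INR (\sum_(l < n.+1) B l * M n a l)%nat <=
          1 * INR (\sum_(l < n.+1) B l * M n a (l - 2 * s))%nat.
  by apply: sum_le_R.
have K4 : (\sum_(l < n.+1) B l * M n a (l - 2 * s) <= \sum_(l < n.+1) M n a l)%nat.
  apply: (@leq_trans (\sum_(l < n.+1 + 2 * s) (2 * s <= l) * M n a (l - 2 * s))%nat); last by rewrite sum_shift.
  apply: leq_trans (sum_widen (fun l => (2 * s <= l) * M n a (l - 2 * s))%nat n.+1 (2 * s)).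
  apply: leq_sum => l _.
  case hB: (B l); last by rewrite mul0n.
  by rewrite (ltnW (hB2s _ hB)).
have K5 : INR (\sum_(l < n.+1) B l * M n a (l - 2 * s))%nat <= INR (\sum_(l < n.+1) M n a l)%nat.
  by apply: le_INR; apply/leP.
set X := INR _ in K3 *; set Y := INR (\sum_(l < n.+1) M n a l)%nat in K5 *.
have hX : 0 <= X by apply: pos_INR.
rewrite Rpower_Ropp.
have hP : 0 < Rpower 2 r by rewrite /Rpower; apply: exp_pos.
have : X * Rpower 2 r <= Y by nra.
move=> hXY.
apply: (Rmult_le_reg_l (Rpower 2 r)) => //.
rewrite -Rmult_assoc Rinv_r; last lra.
lra.
Qed.

Local Open Scope R_scope.

Definition Hyp (e : R) (Q : pred (seq bool)) :=
  forall n a, INR (cnt n a Q) <= e * INR 'C(n, a).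

Lemma hyp_redv e Q : 0 <= e -> Hyp e Q -> Hyp e (fun u => Q (redv u)).
Proof.
move=> he H n a.
rewrite -cnt_true.
have -> : cnt n a predT = cnt n a (fun u => predT (redv u)) by [].
rewrite !decomp -(Rmult_1_l (INR _)).
apply: sum_le_R => l; apply: sum_le_R => k.
rewrite !(INR_muln (g n a l k)) cnt_true Rmult_1_l.
have := H l k; have := pos_INR (g n a l k); nra.
Qed.

Lemma hyp_iter e Q k : 0 <= e -> Hyp e Q -> Hyp e (fun u => Q (iter k redv u)).
Proof.
move=> he; elim: k Q => [|k IH] Q HQ n a.
  by rewrite (@cnt_ext n a _ Q) //; apply: HQ.
rewrite (@cnt_ext n a _ (fun u => (fun v => Q (iter k redv v)) (redv u))).
  exact: (hyp_redv he (IH Q HQ) n a).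
by move=> u _ _; rewrite iterSr.
Qed.

Lemma redv_count v :
  (count id v <= 2 * count id (redv v) + ((size v)./2 - size (redv v)) + odd (size v))%nat /\
  (size v - count id v <= 2 * (size (redv v) - count id (redv v)) +
      ((size v)./2 - size (redv v)) + odd (size v))%nat.
Proof.
have: (size v <= size v)%nat by [].
move: {2}(size v) => n; elim: n v => [|n IH] [|x [|y t]] //= hs; try (case: x => /=; lia).
have [h1 h2] := IH t ltac:(lia).
have h3 := redv_size t.
have h4 := count_size id (redv t).
have h5 := count_size id t.
case: x; case: y => /=; rewrite ?negbK; lia.
Qed.

Definition cc (v : seq bool) := ((size v)./2 - size (redv v))%nat.
Definition mm (v : seq bool) := minn (count id v) (size v - count id v).

Lemma size_step v : size v = ((size v)./2 + size (redv v) + cc v + odd (size v))%nat.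
Proof.
have h1 := redv_size v; have h2 := odd_double_half (size v).
rewrite -addnn in h2; rewrite /cc; lia.
Qed.

Lemma mm_step v : (mm v <= 2 * mm (redv v) + cc v + odd (size v))%nat.
Proof.
have [h1 h2] := redv_count v; have h3 := redv_size v.
have h4 := count_size id (redv v).
rewrite /mm /cc; lia.
Qed.

Lemma size_iter k v : (2 ^ k * size (iter k redv v) <= size v)%nat.
Proof.
elim: k => [|k IH]; first by rewrite mul1n.
rewrite iterS expnS; apply: leq_trans IH.
have h1 := redv_size (iter k redv v); have h2 := odd_double_half (size (iter k redv v)).
rewrite -addnn in h2.
rewrite (mulnC 2%nat (2 ^ k)%nat) -mulnA; apply: leq_mul => //; lia.
Qed.

Lemma size_ident v j : size v =
  (size (iter j redv v) + \sum_(k < j) (cc (iter k redv v) + odd (size (iter k redv v)))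
   + \sum_(k < j) (size (iter k redv v))./2)%nat.
Proof.
elim: j => [|j IH]; first by rewrite !big_ord0 !addn0.
rewrite !big_ord_recr /= IH.
have hs := size_step (iter j redv v).
move: (\sum_(i < j) (cc (iter i redv v) + odd (size (iter i redv v))))%nat
      (\sum_(i < j) (size (iter i redv v))./2)%nat => S1 S2.
lia.
Qed.

Fixpoint sumR (f : nat -> R) j := match j with 0%nat => 0 | S j => sumR f j + f j end.

Lemma pot v (E : nat -> R) j :
  (forall k, (k < j)%nat -> INR (mm (iter k redv v)) <= 2 * INR (cc (iter k redv v)) + E k) ->
  2 / 3 * INR (mm v) <= 2 / 3 * INR (mm (iter j redv v)) +
    INR (\sum_(k < j) (cc (iter k redv v) + odd (size (iter k redv v))))%nat +
    sumR (fun k => E k / 3) j.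
Proof.
elim: j => [|j IH] H.
  by rewrite big_ord0 /=; lra.
have IH' := IH (fun k hk => H k (ltnW hk)).
have Hj := H j (ltnSn j).
rewrite big_ord_recr /= INR_addn INR_addn.
set w := iter j redv v in Hj IH' *.
have hs := mm_step w.
have : INR (mm w) <= 2 * INR (mm (redv w)) + INR (cc w) + INR (odd (size w)).
  by rewrite -(INR_muln 2) -!INR_addn; apply: le_INR; apply/leP.
have := pos_INR (odd (size w)).
set S := (\sum_(i < j) _)%nat in IH' *.
lra.
Qed.

Definition Ek (u : R) (k : nat) : R := 32 * u * (3 / 4) ^ k.
Definition badk (N : nat) (u : R) (k : nat) (w : seq bool) : bool :=
  (2 ^ k * size w <= N)%nat && Bad (Ek u k) w.

Lemma sumR_Ek u j : sumR (fun k => Ek u k / 3) j = 128 / 3 * u * (1 - (3 / 4) ^ j).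
Proof.
elim: j => [|j IH] /=; first by ring.
rewrite IH /Ek; field.
Qed.

Lemma key N A (u : R) (v : seq bool) : size v = N -> count id v = A ->
  0 < u ->
  (forall k, (k < trunc_log 2 N)%nat -> ~~ badk N u k (iter k redv v)) ->
  INR (\sum_(i < trunc_log 2 N) (size (iter i redv v))./2)%nat <
    INR N - 2 / 3 * INR (minn A (N - A)) + 50 * u.
Proof.
move=> hs hc hu H.
set L := trunc_log 2 N.
have hp := @pot v (Ek u) L.
have hpot : forall k, (k < L)%nat -> INR (mm (iter k redv v)) <= 2 * INR (cc (iter k redv v)) + Ek u k.
  move=> k hk; have := H k hk.
  rewrite /badk -hs size_iter /= /Bad /Rltb.
  case: Rlt_dec => //= hh _.
  by rewrite /mm /cc; lra.
have {}hp := hp hpot.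
rewrite sumR_Ek in hp.
have hid := size_ident v L.
rewrite hs in hid.
have hmL : INR (mm (iter L redv v)) <= INR (size (iter L redv v)).
  apply: le_INR; apply/leP; rewrite /mm.
  have := count_size id (iter L redv v); lia.
have hm0 : mm v = minn A (N - A) by rewrite /mm hs hc.
rewrite hm0 in hp.
have hpow : 0 <= (3 / 4) ^ L by apply: pow_le; lra.
have eN : INR N = INR (size (iter L redv v)) + INR (\sum_(k < L) (cc (iter k redv v) + odd (size (iter k redv v))))%nat
   + INR (\sum_(k < L) (size (iter k redv v))./2)%nat.
  by rewrite {1}hid !INR_addn.
have hp' : 2 / 3 * INR (minn A (N - A)) <=
    2 / 3 * INR (mm (iter L redv v)) +
    INR (\sum_(k < L) (cc (iter k redv v) + odd (size (iter k redv v))))%nat + 128 / 3 * u.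
  have : 0 <= u * (3 / 4) ^ L by apply: Rmult_le_pos; lra.
  nra.
have := pos_INR (mm (iter L redv v)).
set S2 := (\sum_(i < L) (size (iter i redv v))./2)%nat in eN *.
set S1 := (\sum_(i < L) (cc (iter i redv v) + odd (size (iter i redv v))))%nat in eN hp' *.
lra.
Qed.

Lemma pow34 k : 1 <= (3 / 4) ^ k * (3 / 4) ^ k * 2 ^ k.
Proof.
elim: k => [|k IH] /=; first lra.
have h : 0 <= (3 / 4) ^ k * (3 / 4) ^ k * 2 ^ k by lra.
nra.
Qed.

Lemma INR_exp2 k : INR (2 ^ k)%nat = 2 ^ k.
Proof.
elim: k => [|k IH]; first by rewrite expn0 /=.
by rewrite expnS INR_muln IH /=.
Qed.

Lemma hyp_badk N (r u : R) k : 1 <= r -> 0 < u -> u * u = r * INR N ->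
  Hyp (Rpower 2 (- r)) (badk N u k).
Proof.
move=> hr hu huu n a.
have he : 0 < Rpower 2 (- r) by rewrite /Rpower; apply: exp_pos.
case: (leqP (2 ^ k * n) N) => h.
  apply: Rle_trans (@tail n a (Ek u k) r hr _ _).
  - apply: le_INR; apply/leP; apply: cnt_le => v _ _ /andP [].
    done.
  - rewrite /Ek; apply: Rmult_le_pos; first lra.
    by apply: pow_le; lra.
  - have hN : 2 ^ k * INR n <= INR N.
      by rewrite -INR_exp2 -INR_muln; apply: le_INR; apply/leP.
    have hp := pow34 k.
    have hn := pos_INR n.
    have h2 : 0 < 2 ^ k by apply: pow_lt; lra.
    have h3 : INR n <= (3 / 4) ^ k * (3 / 4) ^ k * INR N.
      have : INR n <= (3 / 4) ^ k * (3 / 4) ^ k * 2 ^ k * INR n by nra.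
      have : 0 <= (3 / 4) ^ k * (3 / 4) ^ k by apply: Rmult_le_pos; apply: pow_le; lra.
      nra.
    rewrite /Ek.
    have -> : 32 * u * (3 / 4) ^ k * (32 * u * (3 / 4) ^ k) = 1024 * (u * u) * ((3 / 4) ^ k * (3 / 4) ^ k) by ring.
    rewrite huu.
    have : 0 <= r * INR n by apply: Rmult_le_pos; lra.
    nra.
have -> : cnt n a (badk N u k) = 0%nat.
  apply/eqP; rewrite -leqn0 -(cnt0 n a); apply: cnt_le => v hv _ /andP [h1 _].
  by rewrite hv in h1; lia.
rewrite /=; apply: Rmult_le_pos; [lra | apply: pos_INR].
Qed.

Lemma count_or (s : seq (seq bool)) (c p q : pred (seq bool)) :
  (count (fun u => c u && (p u || q u)) s <= count (fun u => c u && p u) s + count (fun u => c u && q u) s)%nat.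
Proof.
elim: s => [|x s IH] //=.
case: (c x); case: (p x); case: (q x) => /=; lia.
Qed.

Lemma cnt_has n a (F : nat -> pred (seq bool)) ks :
  (cnt n a (fun v => has (fun k => F k v) ks) <= \sum_(k <- ks) cnt n a (F k))%nat.
Proof.
elim: ks => [|k ks IH].
  by rewrite big_nil (@cnt_ext n a _ pred0) // cnt0.
rewrite big_cons; apply: leq_trans (count_or _ _ _ _) _.
by apply: leq_add.
Qed.

Lemma sum_const_le (s : seq nat) (f : nat -> nat) (c : R) :
  (forall k, INR (f k) <= c) -> INR (\sum_(k <- s) f k)%nat <= INR (size s) * c.
Proof.
move=> H; elim: s => [|x s IH]; first by rewrite big_nil /=; lra.
rewrite big_cons INR_addn (_ : size (x :: s) = (size s).+1) // S_INR; have := H x; lra.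
Qed.

Lemma card_bridge N (P : pred (seq bool)) :
  #|[set X : N.-tuple bool | P (tval X)]| = count P (allseq N).
Proof.
rewrite -sum1_card (eq_bigl (fun X : N.-tuple bool => P (tval X))); last by move=> X; rewrite inE.
rewrite sum1_count -(count_map (@tval N bool) P).
apply/permP; apply: uniq_perm.
- by rewrite map_inj_uniq ?index_enum_uniq //; apply: val_inj.
- exact: uniq_allseq.
- move=> s; rewrite mem_allseq; apply/mapP/idP => [[X _ ->]|/eqP hs].
    by rewrite size_tuple.
  by exists (Tuple (introT eqP hs)); rewrite ?mem_index_enum.
Qed.

Lemma L_le_log N : (0 < N)%nat -> INR (trunc_log 2 N) <= log2 (INR N).
Proof.
move=> hN.
have h1 := trunc_logP (isT : (1 < 2)%nat) hN.
set L := trunc_log 2 N in h1 *.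
have h2 : 2 ^ L <= INR N by rewrite -INR_exp2; apply: le_INR; apply/leP.
have h3 : 0 < 2 ^ L by apply: pow_lt; lra.
have hl2 : 0 < ln 2 by have := ln_lt_2; lra.
have h4 : ln (2 ^ L) <= ln (INR N).
  case: (Rle_lt_or_eq_dec _ _ h2) => [hlt|->]; last lra.
  by apply: Rlt_le; apply: ln_increasing.
rewrite ln_pow in h4; last lra.
rewrite /log2; apply: (Rmult_le_reg_r (ln 2)) => //.
rewrite /Rdiv Rmult_assoc Rinv_l; last lra.
lra.
Qed.

Theorem mainTheorem4 :
  exists d : R, forall (N A B : nat), (0 < N)%N -> (A + B)%N = N ->
    forall r : R, 1 <= r ->
      prob_OP N A B d r <= Rpower 2 (- r) * log2 (INR N).
Proof.
exists 50 => N A B hN hAB r hr.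
rewrite /prob_OP.
have hB : B = (N - A)%nat by lia.
have hAN : (A <= N)%nat by lia.
set L := trunc_log 2 N.
have hN1 : 1 <= INR N by apply: (le_INR 1); apply/leP.
have hrN : 0 < r * INR N by nra.
set u := sqrt (r * INR N).
have hu : u * u = r * INR N by apply: sqrt_def; lra.
have hu0 : 0 < u by apply: sqrt_lt_R0.
set e := Rpower 2 (- r).
have he : 0 < e by rewrite /e /Rpower; apply: exp_pos.
set thr := INR N - 2 / 3 * INR (minn A B) + 50 * sqrt (r * INR N).
set Ev := fun v : seq bool => Rleb thr (INR (\sum_(i < L) (size (iter i redv v))./2)%nat).
have ecard : #|[set X : N.-tuple bool | (count id X == A) && Rleb thr (INR (C_OP X))]| = cnt N A Ev.
  rewrite /cnt -card_bridge; apply: eq_card => X; rewrite !inE C_OP_eq.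
  done.
rewrite ecard.
have hincl : (cnt N A Ev <= cnt N A (fun v => has (fun k => badk N u k (iter k redv v)) (iota 0 L)))%nat.
  apply: cnt_le => v hs hc hev.
  have [//|hn] := boolP (has (fun k => badk N u k (iter k redv v)) (iota 0 L)).
  exfalso.
  have H : forall k, (k < L)%nat -> ~~ badk N u k (iter k redv v).
    by move=> k hk; apply: (hasPn hn); rewrite mem_iota.
  have := key hs hc hu0 H.
  move: hev; rewrite /Ev /Rleb /thr -hB; case: Rle_dec => //= hle _.
  rewrite -/u in hle.
  move=> hlt; rewrite -/L in hlt.
  exact: (Rlt_irrefl _ (Rlt_le_trans _ _ _ hlt hle)).
have hsum := cnt_has N A (fun k v => badk N u k (iter k redv v)) (iota 0 L).
have hk : forall k, INR (cnt N A (fun v => badk N u k (iter k redv v))) <= e * INR 'C(N, A).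
  by move=> k; apply: (hyp_iter k (Rlt_le _ _ he) (hyp_badk k hr hu0 hu)).
have hsR := sum_const_le (iota 0 L) hk.
rewrite size_iota in hsR.
have hC : 0 < INR 'C(N, A) by apply: lt_0_INR; apply/ltP; rewrite bin_gt0.
have hlog := L_le_log hN.
have h1 : INR (cnt N A Ev) <= INR L * (e * INR 'C(N, A)).
  apply: Rle_trans hsR; apply: le_INR; apply/leP; exact: leq_trans hincl hsum.
rewrite -/L in hlog.
apply: (Rmult_le_reg_r (INR 'C(N, A))) => //.
rewrite /Rdiv Rmult_assoc Rinv_l; last lra.
have h2 : 0 <= (log2 (INR N) - INR L) * (e * INR 'C(N, A)).
  apply: Rmult_le_pos; [lra | apply: Rmult_le_pos; lra].
nra.
Qed.
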